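(* Let $n=|V|\ge 4$ and suppose the designer does not know the relationship network. Then there is no valid mechanism $g:\boldsymbol\Theta\to[0,1]^V$ that is both DSIC and efficient.
   Context: Let $V=\{1,\dots,n\}$ be a finite set of agents. A relationship network on $V$ assigns to every unordered pair of distinct agents exactly one of three symmetric relations: friends, enemies, or impartial; $F_i,E_i,I_i$ denote the friends, enemies and impartials of $i$, partitioning $V\setminus\{i\}$. A state of the world is a pair consisting of a set $N\subseteq V$ of needy agents and a relationship network. Preferences: fix weights $w_f,w_e>0$; an agent with friend set $F$ and enemy set $E$ and own index $i$ ranks $p,p'\in[0,1]^V$ by $p\succ p'$ iff either $p_i>p'_i$, or $p_i=p'_i$ and $w_f\sum_{j\in F}(p_j-p'_j)-w_e\sum_{j\in E}(p_j-p'_j)>0$; $p\succsim p'$ means not $p'\succ p$. Unknown-network setting: agent $i$'s type set $\Theta_i$ consists of all triples $(N,F,E)$ with $N\subseteq V$ and $F,E$ disjoint subsets of $V\setminus\{i\}$; $\boldsymbol\Theta=\prod_{i\in V}\Theta_i$. A mechanism is $g:\boldsymbol\Theta\to[0,1]^V$; it is valid if $\sum_i g_i(\mathbf m)\le1$ for all $\mathbf m\in\boldsymbol\Theta$. It is DSIC if for all $i$, all $\mathbf m\in\boldsymbol\Theta$ and all $m'_i\in\Theta_i$, $g(\mathbf m)\succsim_{m_i} g(m'_i,\mathbf m_{-i})$, where $\succsim_{m_i}$ is the preference of agent $i$ with the friend and enemy sets given in $m_i$. At a state, the truthful profile is $m_i=(N,F_i,E_i)$ for all $i$. The mechanism is efficient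 if at every state with $N\neq\varnothing$, $\sum_{i\in N}g_i(\mathbf m)=1$ at the truthful profile $\mathbf m$. *)

(* Defs.v *)
From HB Require Import structures.
From mathcomp Require Import all_boot all_order all_algebra.
From mathcomp Require Import reals.
Set Implicit Arguments. Unset Strict Implicit. Unset Printing Implicit Defensive.
Import Order.TTheory GRing.Theory Num.Theory.
Local Open Scope ring_scope.

Definition type_t (n : nat) : Type := ({set 'I_n} * {set 'I_n} * {set 'I_n})%type.
Definition tN n (t : type_t n) : {set 'I_n} := t.1.1.
Definition tF n (t : type_t n) : {set 'I_n} := t.1.2.
Definition tE n (t : type_t n) : {set 'I_n} := t.2.

Definition in_Theta n (i : 'I_n) (t : type_t n) : Prop :=
  [/\ tF t :&: tE t = set0, i \notin tF t & i \notin tE t].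

Definition profile (n : nat) : Type := {ffun 'I_n -> type_t n}.
Definition in_bTheta n (m : profile n) : Prop := forall i, in_Theta i (m i).

Definition upd n (m : profile n) (i : 'I_n) (t : type_t n) : profile n :=
  [ffun j => if j == i then t else m j].

Definition mechanism (R : realType) (n : nat) : Type := profile n -> 'I_n -> R.

Definition spref (R : realType) n (wf we : R) (i : 'I_n) (F E : {set 'I_n})
  (p p' : 'I_n -> R) : Prop :=
  p i > p' i \/
  (p i = p' i /\
   wf * (\sum_(j in F) (p j - p' j)) - we * (\sum_(j in E) (p j - p' j)) > 0).

Definition wpref (R : realType) n (wf we : R) (i : 'I_n) (F E : {set 'I_n})
  (p p' : 'I_n -> R) : Prop := ~ spref wf we i F E p' p.

Definition mech_valid (R : realType) n (g : mechanism R n) : Prop :=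
  forall m : profile n, in_bTheta m -> \sum_(i < n) g m i <= 1.

Definition mech_range01 (R : realType) n (g : mechanism R n) : Prop :=
  forall m : profile n, in_bTheta m -> forall i, 0 <= g m i <= 1.

Definition DSIC (R : realType) n (wf we : R) (g : mechanism R n) : Prop :=
  forall (i : 'I_n) (m : profile n) (t : type_t n),
    in_bTheta m -> in_Theta i t ->
    wpref wf we i (tF (m i)) (tE (m i)) (g m) (g (upd m i t)).

(* A relationship network: symmetric, irreflexive, disjoint friend / enemy
   relations; every other pair of distinct agents is impartial. *)
Definition network n (fr en : rel 'I_n) : Prop :=
  [/\ forall i j, fr i j = fr j i, forall i j, en i j = en j i,
      forall i, ~~ fr i i, forall i, ~~ en i i
    & forall i j, ~~ (fr i j && en i j)].

Definition truthful n (N : {set 'I_n}) (fr en : rel 'I_n) : profile n :=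
  [ffun i => (N, [set j | fr i j], [set j | en i j])].

Definition efficient (R : realType) n (g : mechanism R n) : Prop :=
  forall (N : {set 'I_n}) (fr en : rel 'I_n),
    network fr en -> N != set0 ->
    \sum_(i in N) g (truthful N fr en) i = 1.

(* Main.v *)
Require Import Defs.
From HB Require Import structures.
From mathcomp Require Import all_boot all_order all_algebra.
From mathcomp Require Import reals.
Import Order.TTheory GRing.Theory Num.Theory.
Local Open Scope ring_scope.
Set Implicit Arguments. Unset Strict Implicit. Unset Printing Implicit Defensive.

Lemma upd_bTheta n (m : profile n) i t :
  in_bTheta m -> in_Theta i t -> in_bTheta (upd m i t).
Proof. by move=> Hm Ht j; rewrite /upd ffunE; case: eqP => [->|]. Qed.

Lemma updK n (m : profile n) i t : upd (upd m i t) i (m i) = m.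
Proof. by apply/ffunP => j; rewrite !ffunE; case: eqP => // ->. Qed.

Lemma own_inv (R : realType) n (wf we : R) (g : mechanism R n) i m t :
  DSIC wf we g -> in_bTheta m -> in_Theta i t -> g (upd m i t) i = g m i.
Proof.
move=> D Hm Ht.
have Hm' := upd_bTheta Hm Ht.
apply/eqP; rewrite eq_le; apply/andP; split.
- have := D i m t Hm Ht; rewrite /wpref /spref => H.
  rewrite leNgt; apply/negP => lt; apply: H; by left.
- have := D i (upd m i t) (m i) Hm' (Hm i); rewrite updK /wpref /spref => H.
  rewrite leNgt; apply/negP => lt; apply: H; by left.
Qed.

Lemma friend_le (R : realType) n (wf we : R) (g : mechanism R n) c h m t :
  0 < wf -> DSIC wf we g -> in_bTheta m -> tF (m c) = [set h] ->
  tE (m c) = set0 -> in_Theta c t -> g (upd m c t) h <= g m h.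
Proof.
move=> wf0 D Hm HF HE Ht.
have := D c m t Hm Ht; rewrite /wpref /spref HF HE big_set1 big_set0 mulr0 subr0 => H.
rewrite leNgt; apply/negP => lt; apply: H; right; split.
  by rewrite (own_inv D Hm Ht).
by rewrite mulr_gt0 // subr_gt0.
Qed.

Lemma zero_other (R : realType) n (g : mechanism R n) m a b :
  mech_range01 g -> mech_valid g -> in_bTheta m -> a != b -> g m b = 1 ->
  g m a = 0.
Proof.
move=> Hr Hv Hm ab gb.
have := Hv m Hm; rewrite (bigD1 b) //= (bigD1 a) //= gb.
have /andP[ha _] := Hr m Hm a.
have hs : 0 <= \sum_(i < n | (i != b) && (i != a)) g m i.
  by apply: sumr_ge0 => i _; have /andP[] := Hr m Hm i.
move=> H; apply/eqP; rewrite eq_le ha andbT.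
have : g m a + \sum_(i < n | (i != b) && (i != a)) g m i <= 0.
  by rewrite -(lerD2l 1) addr0.
move=> H2; apply: le_trans H2; by rewrite lerDl.
Qed.

Definition emp n : rel 'I_n := fun _ _ => false.
Arguments emp : clear implicits.

Definition frV n (h o : 'I_n) : rel 'I_n := fun i j =>
  ((i == h) && (j != h) && (j != o)) || ((j == h) && (i != h) && (i != o)).

Lemma network_emp n : network (emp n) (emp n).
Proof. by split => // i j; rewrite andbF. Qed.

Lemma network_frV n (h o : 'I_n) : network (frV h o) (emp n).
Proof.
split.
- by move=> i j; rewrite /frV orbC.
- by [].
- by move=> i; rewrite /frV; case: (i == h).
- by [].
- by move=> i j; rewrite andbF.
Qed.

Lemma truthful_bTheta n (N : {set 'I_n}) fr en :
  network fr en -> in_bTheta (truthful N fr en).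
Proof.
case=> _ _ irf ire dis i; rewrite /in_Theta /tF /tE /truthful ffunE /=; split.
- by apply/setP => j; rewrite !inE; apply: negbTE (dis i j).
- by rewrite inE irf.
- by rewrite inE ire.
Qed.

Definition Rp n (h o : 'I_n) (N : {set 'I_n}) (S : {set 'I_n}) : profile n :=
  [ffun i => (if i \in S then ([set o], [set h], set0)
              else (N, set0, set0)) : type_t n].

Lemma hub (R : realType) n (wf we : R) (g : mechanism R n) (h o : 'I_n) :
  0 < wf -> mech_range01 g -> mech_valid g -> DSIC wf we g -> efficient g ->
  h != o -> g (truthful [set h; o] (emp n) (emp n)) h = 0.
Proof.
move=> wf0 Hr Hv D Eff ho.
set N := [set h; o].
set V' := [set i | (i != h) && (i != o)].
have bR : forall S : {set 'I_n}, S \subset V' -> in_bTheta (Rp h o N S).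
  move=> S sS i; rewrite /in_Theta /tF /tE ffunE.
  case: ifP => iS /=; rewrite ?setI0 ?in_set0 ?in_set1 //; split => //.
  by move/subsetP: sS => /(_ i iS); rewrite inE => /andP[].
have thN : forall i, in_Theta i ((N, set0, set0) : type_t n).
  by move=> i; rewrite /in_Theta /tF /tE /= setI0 in_set0.
have chain : forall k (S : {set 'I_n}), #|S| = k -> S \subset V' ->
    g (Rp h o N set0) h <= g (Rp h o N S) h.
  elim=> [|k IH] S cS sS.
    by rewrite (cards0_eq cS).
  have [x xS] : exists x, x \in S.
    by apply/set0Pn; rewrite -card_gt0 cS.
  have sS' : S :\ x \subset V' by apply: subset_trans sS; apply: subsetDl.
  have cS' : #|S :\ x| = k.
    by move: cS; rewrite (cardsD1 x S) xS add1n => -[].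
  apply: le_trans (IH _ cS' sS') _.
  have -> : Rp h o N (S :\ x) = upd (Rp h o N S) x (N, set0, set0).
    apply/ffunP => j; rewrite !ffunE in_setD1.
    by case: (eqVneq j x).
  apply: (friend_le wf0 D) => //; first exact: bR sS.
  - by rewrite /tF ffunE xS.
  - by rewrite /tE ffunE xS.
have hV : h \notin V' by rewrite inE eqxx.
have oV : o \notin V' by rewrite inE eqxx andbF.
have eR0 : Rp h o N set0 = truthful N (emp n) (emp n).
  apply/ffunP => i; rewrite !ffunE in_set0; congr (_, _, _);
  by apply/setP => j; rewrite !inE.
have c0 := chain _ V' erefl (subxx V').
set T2 := truthful [set o] (frV h o) (emp n).
have bT2 : in_bTheta T2 := truthful_bTheta _ (network_frV h o).
set tH : type_t n := ([set o], V', set0).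
have thH : in_Theta h tH.
  by rewrite /in_Theta /tF /tE /= setI0 in_set0 hV.
set P := upd (Rp h o N V') h tH.
have bP : in_bTheta P := upd_bTheta (bR V' (subxx _)) thH.
have eP : P = upd T2 o (N, set0, set0).
  apply/ffunP => j; rewrite !ffunE.
  case: (eqVneq j h) => [->|jh].
    rewrite (negbTE ho) /tH; congr (_, _, _); apply/setP => k;
    by rewrite !inE /frV /emp ?eqxx /= ?andbF ?orbF.
  case: (eqVneq j o) => [->|jo]; first by rewrite (negbTE oV).
  have jV : j \in V' by rewrite inE jh jo.
  rewrite jV; congr (_, _, _); apply/setP => k;
  by rewrite !inE /frV /emp (negbTE jh) ?jh ?jo /= ?andbT.
have gPo : g P o = 1.
  rewrite eP (own_inv D bT2 (thN o)).
  have ne : [set o] != set0 by apply/set0Pn; exists o; rewrite inE.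
  by have := Eff [set o] (frV h o) (emp n) (network_frV h o) ne; rewrite big_set1.
have gPh : g P h = 0 := zero_other Hr Hv bP ho gPo.
have gRV : g (Rp h o N V') h = 0 by rewrite -gPh /P (own_inv D (bR V' (subxx _)) thH).
have bT0 : in_bTheta (truthful N (emp n) (emp n)) := truthful_bTheta _ (network_emp n).
apply/eqP; rewrite eq_le; apply/andP; split.
  by rewrite -eR0 -gRV.
by have /andP[] := Hr _ bT0 h.
Qed.

Theorem theorem4 (R : realType) (n : nat) (wf we : R) :
  (4 <= n)%N -> 0 < wf -> 0 < we ->
  ~ exists g : mechanism R n,
      [/\ mech_range01 g, mech_valid g, DSIC wf we g & efficient g].
Proof.
move=> n4 wf0 we0 [g [Hr Hv D Eff]].
have n1 : (1 < n)%N by apply: leq_trans n4.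
pose a : 'I_n := Ordinal (ltnW n1).
pose b : 'I_n := Ordinal n1.
have ab : a != b by [].
have ba : b != a by [].
have ga := hub wf0 Hr Hv D Eff ab.
have gb := hub wf0 Hr Hv D Eff ba.
rewrite setUC in gb.
have ne : [set a; b] != set0 by apply/set0Pn; exists a; rewrite !inE eqxx.
have := Eff [set a; b] (emp n) (emp n) (network_emp n) ne.
rewrite big_setU1 /= ?inE // big_set1 ga gb addr0 => /eqP.
by rewrite eq_sym oner_eq0.
Qed.
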